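(* Fix integers $d,k\ge0$ and $n\ge1$, and let $f:\mathfrak{S}_n\to\mathbb{R}$ be a (real) linear combination of indicators $1_{IJ}$ with each partial permutation $(I,J)$ of size at most $k$. Then for $\lambda\vdash n$, $\mathbb{E}_\lambda[f^d]$ depends on $\lambda$ only through $m_1(\lambda),m_2(\lambda),\dots,m_{kd}(\lambda)$. In particular, if $m_i(\lambda)=0$ for all $i\in[kd]$ (and $kd<n$ is not required), then $\mathbb{E}_\lambda[f^d]=\mathbb{E}_{(n)}[f^d]$, where $(n)$ denotes the partition with a single part $n$.
   Context: A partial permutation of size $k$ in $\mathfrak{S}_n$ is a pair $(I,J)$ of $k$-tuples $I=(i_1,\dots,i_k)$, $J=(j_1,\dots,j_k)$, each with distinct entries in $[n]$; $1_{IJ}(\pi)=1$ if $\pi(i_\ell)=j_\ell$ for all $\ell$ and $0$ otherwise. For $\lambda\vdash n$, $\mathbb{E}_\lambda$ is expectation under the uniform distribution on permutations of cycle type $\lambda$, and $m_i(\lambda)$ is the number of parts of $\lambda$ equal to $i$. *)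

(* Defs.v *)
From mathcomp Require Import all_boot all_order all_algebra all_fingroup.
Set Implicit Arguments. Unset Strict Implicit. Unset Printing Implicit Defensive.
Import Order.TTheory GRing.Theory Num.Theory.
Local Open Scope ring_scope.

Definition partial_perm (n k : nat) (IJ : seq 'I_n * seq 'I_n) : bool :=
  [&& size IJ.1 == k, size IJ.2 == k, uniq IJ.1 & uniq IJ.2].

Definition ind_pp (R : nzRingType) (n : nat) (IJ : seq 'I_n * seq 'I_n)
    (pi : {perm 'I_n}) : R :=
  (all (fun ij : 'I_n * 'I_n => pi ij.1 == ij.2) (zip IJ.1 IJ.2))%:R.

Definition lin_comb_pp (R : nzRingType) (n k : nat) (f : {perm 'I_n} -> R) : Prop :=
  exists s : seq (R * (seq 'I_n * seq 'I_n)),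
    (forall t, t \in s -> exists2 l, (l <= k)%N & partial_perm l t.2) /\
    forall pi, f pi = \sum_(t <- s) t.1 * ind_pp R t.2 pi.

Definition is_partition (n : nat) (la : seq nat) : bool :=
  [&& sorted geq la, all (fun x => 0 < x)%N la & sumn la == n].

(* cycle type of a permutation (including fixed points as 1-cycles) *)
Definition cycle_type (n : nat) (pi : {perm 'I_n}) : seq nat :=
  sort geq [seq #|c| | c : {set 'I_n} <- enum (porbits pi)].

Definition mult (i : nat) (la : seq nat) : nat := count_mem i la.

Definition Exp_ct (R : fieldType) (n : nat) (la : seq nat)
    (g : {perm 'I_n} -> R) : R :=
  (\sum_(pi : {perm 'I_n} | cycle_type pi == la) g pi)
    / (#|[set pi : {perm 'I_n} | cycle_type pi == la]|)%:R.

(* Main.v *)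
Require Import Defs.
From mathcomp Require Import all_boot all_order all_algebra all_fingroup.
Set Implicit Arguments. Unset Strict Implicit. Unset Printing Implicit Defensive.

Section Ext.
Variable T : finType.

Lemma perm_ext (S : {set T}) (F : T -> T) :
  {in S &, injective F} -> exists p : {perm T}, {in S, p =1 F}.
Proof.
move: {2}#|S| (leqnn #|S|) => m; elim: m S => [|m IH] S.
  rewrite leqn0 cards_eq0 => /eqP -> _; exists 1%g => x; by rewrite inE.
move=> hS injF; case: (set_0Vmem S) => [-> | [x xS]].
  by exists 1%g => y; rewrite inE.
have hS' : #|S :\ x| <= m by rewrite (cardsD1 x S) xS add1n ltnS in hS.
have [p1 hp1] := IH _ hS' (sub_in2 (fun y => @subsetP _ _ _ (subD1set S x) y) injF).
exists (p1 * tperm (p1 x) (F x))%g => y yS; rewrite permM.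
case: (eqVneq y x) => [-> | ne]; first by rewrite tpermL.
have yS' : y \in S :\ x by rewrite !inE ne.
rewrite (hp1 y yS') tpermD //.
  by rewrite -(hp1 y yS'); apply/eqP => /perm_inj /eqP; rewrite eq_sym (negPf ne).
by apply/eqP => /(injF _ _ xS yS) /eqP; rewrite eq_sym (negPf ne).
Qed.

Lemma perm_count (S : {set T}) (F : T -> T) :
  {in S &, injective F} ->
  #|[set p : {perm T} | [forall x in S, p x == F x]]| = (#|T| - #|S|)`!.
Proof.
move=> injF; have [p0 hp0] := perm_ext injF.
have -> : [set p : {perm T} | [forall x in S, p x == F x]] =
          [set (q * p0)%g | q in [set q | perm_on (~: S) q]].
  apply/setP => p; rewrite inE; apply/idP/idP.
  - move=> /forall_inP hp; apply/imsetP; exists (p * p0^-1)%g; last by rewrite -mulgA mulVg mulg1.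
    rewrite inE; apply/subsetP => x; rewrite !inE; apply: contraNN => xS.
    by rewrite permM (eqP (hp _ xS)) -hp0 // permK.
  - move=> /imsetP [q]; rewrite inE => hq ->; apply/forall_inP => x xS.
    by rewrite permM (out_perm hq) ?inE ?negbK // hp0.
rewrite card_imset; last exact: mulIg.
rewrite cardsE card_perm; congr (_ `!); by rewrite -(cardsC S) addKn.
Qed.

End Ext.

Section Orb.
Variable T : finType.
Definition hc (p : {perm T}) c := #|[set x | #|porbit p x| == c]|.

Lemma porbit_conj (p s : {perm T}) x : porbit (p ^ s)%g (s x) = s @: porbit p x.
Proof.
apply/setP => y; apply/porbitP/imsetP.
- move=> [i ->]; exists ((p ^+ i)%g x); first exact: mem_porbit.
  by rewrite -conjXg permJ.
- move=> [z /porbitP [i ->] ->]; exists i; by rewrite -conjXg permJ.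
Qed.

Lemma hc_conj (p s : {perm T}) c : hc (p ^ s)%g c = hc p c.
Proof.
rewrite /hc -[RHS](card_imset _ (@perm_inj _ s)); apply: eq_card => x.
rewrite inE -{1}(permKV s x) porbit_conj card_imset; last exact: perm_inj.
rewrite -{2}(permKV s x) mem_imset; last exact: perm_inj.
by rewrite inE.
Qed.

Lemma hc_porbits (p : {perm T}) c : hc p c = c * #|[set O in porbits p | #|O| == c]|.
Proof.
rewrite /hc -sum1dep_card.
rewrite (partition_big (porbit p) (fun O => O \in porbits p)); last first.
  by move=> x _; apply: imset_f.
rewrite -sum1dep_card big_distrr /= big_mkcond [RHS]big_mkcond /=.
apply: eq_bigr => O _.
case: (boolP (O \in porbits p)) => //= /imsetP [y _ ->].
rewrite sum1dep_card.
have -> : [set x | (#|porbit p x| == c) && (porbit p x == porbit p y)] =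
          [set x in porbit p y | #|porbit p y| == c].
  apply/setP => x; rewrite !inE eq_porbit_mem andbC.
  case: (boolP (x \in porbit p y)) => //= xy.
  by rewrite -eq_porbit_mem in xy; rewrite (eqP xy).
case: ifP => h.
  by rewrite muln1 -(eqP h); apply: eq_card => x; rewrite !inE andbT.
by apply: eq_card0 => x; rewrite !inE andbF.
Qed.

Lemma count_enum_card (A : {pred T}) (a : pred T) :
  count a (enum A) = #|[set x in A | a x]|.
Proof. by rewrite -sum1_count big_enum_cond sum1dep_card. Qed.

End Orb.

Section Iter.
Variable T : finType.

Lemma iter_period (f : T -> T) x c : iter c f x = x -> forall j, iter j f x = iter (j %% c) f x.
Proof.
move=> h j; rewrite {1}(divn_eq j c) addnC iterD; congr (iter _ f _).
by elim: (j %/ c) => [|k IH]; rewrite ?mul0n // mulSn iterD IH h.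
Qed.

Lemma porbit_mem (p : {perm T}) x y : (y \in porbit p x) = [exists i : 'I_#|porbit p x|, y == iter i p x].
Proof.
apply/idP/existsP.
- rewrite porbit_traject => /trajectP [i hi ->]; by exists (Ordinal hi).
- move=> [i /eqP ->]; rewrite -permX; exact: mem_porbit.
Qed.

Lemma porbit_iter (p : {perm T}) x i : iter i p x \in porbit p x.
Proof. rewrite -permX; exact: mem_porbit. Qed.

Lemma porbit_memP (p : {perm T}) x y : reflect (exists i, y = iter i p x) (y \in porbit p x).
Proof.
apply: (iffP idP).
- rewrite porbit_mem => /existsP [i /eqP ->]; by exists i.
- move=> [i ->]; exact: porbit_iter.
Qed.

Lemma porbit_size (p : {perm T}) y c : 0 < c -> iter c p y = y -> uniq (traject p y c) ->
  #|porbit p y| = c.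
Proof.
move=> c0 hc hu; transitivity (size (traject p y c)); last exact: size_traject.
rewrite -(card_uniqP hu).
apply: eq_card => z; apply/porbit_memP/trajectP.
- move=> [i ->]; exists (i %% c); first by rewrite ltn_pmod.
  exact: iter_period.
- by move=> [i _ ->]; exists i.
Qed.

End Iter.

Section Closed.
Variable T : finType.

Definition satD (p t : {perm T}) (D : {set T}) (s : {perm T}) :=
  [forall x in D, p (s x) == s (t x)].
Definition gD (p t : {perm T}) (D : {set T}) := #|[set s | satD p t D s]|.

Lemma stable_iter (t : {perm T}) (D : {set T}) :
  (forall x, x \in D -> t x \in D) -> forall i x, x \in D -> iter i t x \in D.
Proof. by move=> st; elim=> [|i IH] x xD //=; apply: st; apply: IH. Qed.

Lemma satD_iter (p t : {perm T}) (D : {set T}) (s : {perm T}) : (forall x, x \in D -> t x \in D) -> satD p t D s ->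
  forall i x, x \in D -> iter i p (s x) = s (iter i t x).
Proof.
move=> st /forall_inP h; elim=> [|i IH] x xD //=.
by rewrite IH // (eqP (h _ (stable_iter st i xD))).
Qed.

Lemma satD_porbit (p t : {perm T}) (D : {set T}) (s : {perm T}) : (forall x, x \in D -> t x \in D) -> satD p t D s ->
  forall x, x \in D -> #|porbit p (s x)| = #|porbit t x|.
Proof.
move=> st h x xD; have -> : porbit p (s x) = s @: porbit t x.
  apply/setP => y; apply/porbit_memP/imsetP.
  - move=> [i ->]; exists (iter i t x); first exact: porbit_iter.
    exact: (satD_iter st h).
  - move=> [z /porbit_memP [i ->] ->]; exists i; by rewrite (satD_iter st h).
by rewrite card_imset //; apply: perm_inj.
Qed.

Lemma card_cond (U : finType) (P Q : pred U) :
  #|[set x | P x && Q x]| = \sum_(x | P x) (Q x : nat).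
Proof. by rewrite -sum1dep_card big_mkcondr /=; apply: eq_bigr => x _; case: (Q x). Qed.

Lemma card_mul_pre (w : {perm T}) (P : pred {perm T}) :
  #|[set s | P (w * s)%g]| = #|[set s | P s]|.
Proof.
rewrite -(card_imset _ (mulgI w)); apply: eq_card => s; rewrite !inE.
apply/imsetP/idP.
- by move=> [s' ]; rewrite inE => h ->.
- move=> h; exists (w^-1 * s)%g; by rewrite ?inE mulgA mulgV mul1g.
Qed.

Section Step.
Variables (p t : {perm T}) (D : {set T}) (u : T).
Hypothesis stD : forall x, x \in D -> t x \in D.
Hypothesis uD : u \in D.
Local Notation E := (porbit t u).
Local Notation D' := (D :\: porbit t u).
Local Notation c := #|porbit t u|.
Local Notation traj := (traject t u #|porbit t u|).

Lemma c_gt0 : 0 < c.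
Proof. by rewrite lt0n card_porbit_neq0. Qed.

Lemma E_sub : E \subset D.
Proof. by apply/subsetP => x /porbit_memP [i ->]; apply: stable_iter. Qed.

Lemma stD' x : x \in D' -> t x \in D'.
Proof.
rewrite !inE => /andP [xE xD]; rewrite stD // andbT; apply: contra xE => h.
have : porbit t (t x) = porbit t u by apply/eqP; rewrite eq_porbit_mem.
have -> : t x = (t ^+ 1)%g x by rewrite expg1.
by rewrite porbit_perm => <-; apply: porbit_id.
Qed.

Lemma satD_split s : satD p t D s = satD p t D' s && satD p t E s.
Proof.
apply/forall_inP/andP.
- by move=> h; split; apply/forall_inP => x xD; apply: h;
    [move: xD; rewrite inE => /andP [] | exact: (subsetP E_sub)].
- move=> [/forall_inP h1 /forall_inP h2] x xD.
  case: (boolP (x \in E)) => xE; first exact: h2.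
  by apply: h1; rewrite inE xE.
Qed.

Lemma traj_uniq : uniq traj.
Proof. exact: uniq_traject_porbit. Qed.

Lemma index_iter j : index (iter j t u) traj = j %% c.
Proof.
rewrite (iter_period (iter_porbit t u)) -(@nth_traject _ t _ _ (ltn_pmod j c_gt0) u).
by rewrite index_uniq ?size_traject ?ltn_pmod ?c_gt0 // traj_uniq.
Qed.

Lemma E_iter x : x \in E -> x = iter (index x traj) t u.
Proof.
rewrite porbit_traject => xt.
have hi : index x traj < c by move: (xt); rewrite -index_mem size_traject.
by rewrite -(@nth_traject _ t _ _ hi u) nth_index.
Qed.

Section Fixs.
Variable s : {perm T}.
Hypothesis ss : satD p t D' s.

Definition valid y := (y \notin s @: D') && (#|porbit p y| == c).
Definition Fy y x := if x \in D' then s x else iter (index x traj) p y.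
Definition agree (q : {perm T}) := [forall x in D', q x == s x].

Lemma sat_iterE q : satD p t E q -> forall i, q (iter i t u) = iter i p (q u).
Proof.
move=> /forall_inP h; elim=> [|i IH] //=.
by rewrite -IH (eqP (h _ (porbit_iter _ _ _))).
Qed.

Lemma part_i q y : agree q -> satD p t E q -> q u = y ->
  valid y /\ forall x, x \in D -> q x = Fy y x.
Proof.
move=> /forall_inP ag sE qu; split.
  apply/andP; split.
    apply/imsetP => [[x xD' yx]].
    have : q x = q u by rewrite qu yx (eqP (ag _ xD')).
    move/perm_inj => ex; move: xD'; rewrite ex inE porbit_id //.
  apply/eqP; apply: porbit_size; first exact: c_gt0.
    by rewrite -qu -sat_iterE // iter_porbit.
  have -> : traject p y c = map q traj.
    apply: (@eq_from_nth _ y); first by rewrite size_map !size_traject.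
    move=> i; rewrite size_traject => ic.
    by rewrite (nth_map u) ?size_traject // !nth_traject // sat_iterE // qu.
  by rewrite map_inj_uniq ?traj_uniq //; apply: perm_inj.
move=> x xD; rewrite /Fy; case: ifP => xD'; first exact: eqP (ag _ xD').
have xE : x \in E by move: xD'; rewrite inE xD andbT => /negbFE.
by rewrite {1}(E_iter xE) sat_iterE // qu.
Qed.

Lemma sD'_stable i y : y \in s @: D' -> iter i p y \in s @: D'.
Proof.
move=> /imsetP [x xD' ->]; rewrite (satD_iter stD' ss i xD').
apply: imset_f; exact: stable_iter stD' i x xD'.
Qed.

Lemma part_ii y : valid y -> {in D &, injective (Fy y)}.
Proof.
move=> /andP [ynot /eqP hy] x1 x2 x1D x2D; rewrite /Fy.
have hnot : forall i, i < c -> iter i p y \notin s @: D'.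
  move=> i ic; apply: contra ynot => h.
  have := sD'_stable (c - i) h; rewrite -iterD subnK; last exact: ltnW.
  by rewrite -[X in iter X]hy iter_porbit.
have xE : forall x, x \in D -> x \notin D' -> x \in E.
  by move=> x xD; rewrite inE xD andbT => /negbNE.
have ilt : forall x, x \in E -> index x traj < c.
  by move=> x; rewrite porbit_traject -index_mem size_traject.
case: ifP => h1; case: ifP => h2.
- exact: perm_inj.
- move=> e; have := hnot _ (ilt _ (xE _ x2D (negbT h2))); rewrite -e.
  by rewrite imset_f.
- move=> e; have := hnot _ (ilt _ (xE _ x1D (negbT h1))); rewrite e.
  by rewrite imset_f.
- move=> e; have x1E := xE _ x1D (negbT h1); have x2E := xE _ x2D (negbT h2).
  rewrite (E_iter x1E) (E_iter x2E); congr (iter _ t u); apply/eqP.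
  have hu : uniq (traject p y c) by rewrite -{1}hy uniq_traject_porbit.
  have i1c := ilt _ x1E; have i2c := ilt _ x2E.
  rewrite -(nth_uniq y _ _ hu); try by rewrite size_traject.
  by rewrite (nth_traject _ i1c) (nth_traject _ i2c) e.
Qed.

Lemma part_ii' y (q : {perm T}) : valid y -> (forall x, x \in D -> q x = Fy y x) ->
  [/\ agree q, satD p t E q & q u = y].
Proof.
move=> /andP [ynot /eqP hy] h.
have uE : u \in E by exact: porbit_id.
have uD' : u \notin D' by rewrite inE uE.
have FE : forall j, q (iter j t u) = iter j p y.
  move=> j; have jD : iter j t u \in D by apply: stable_iter.
  have jE : iter j t u \in E by exact: porbit_iter.
  rewrite h // /Fy inE jE /= index_iter.
  by rewrite -(iter_period _ j) // -hy iter_porbit.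
split.
- apply/forall_inP => x xD'; rewrite h; first by rewrite /Fy xD'.
  by move: xD'; rewrite inE => /andP [].
- apply/forall_inP => x xE; rewrite (E_iter xE) FE -!iterS FE //.
- by have := FE 0.
Qed.

Lemma count_y y :
  #|[set q | (agree q && satD p t E q) && (q u == y)]| =
  if valid y then (#|T| - #|D|)`! else 0.
Proof.
case: ifP => vy.
  rewrite -(perm_count (part_ii vy)); apply: eq_card => q; rewrite !inE.
  apply/idP/idP.
  - move=> /andP [/andP [ag sE] /eqP qu]; have [_ h] := part_i ag sE qu.
    by apply/forall_inP => x xD; rewrite h.
  - move=> /forall_inP h; have [ag sE qu] := part_ii' vy (fun x xD => eqP (h x xD)).
    by rewrite ag sE qu eqxx.
apply: eq_card0 => q; rewrite !inE; apply/negP => /andP [/andP [ag sE] /eqP qu].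
by have [v _] := part_i ag sE qu; rewrite v in vy.
Qed.


Definition beta := #|[set x in D' | #|porbit t x| == c]|.

Lemma count_valid : #|[set y | valid y]| = hc p c - beta.
Proof.
set H := [set y | #|porbit p y| == c].
rewrite /hc -/H -(cardsID (s @: D') H).
have -> : H :&: s @: D' = s @: [set x in D' | #|porbit t x| == c].
  apply/setP => y; rewrite !inE; apply/andP/imsetP.
  - move=> [hy /imsetP [x xD' ex]]; exists x => //.
    by rewrite inE xD' -(satD_porbit stD' ss xD') -ex.
  - move=> [x]; rewrite inE => /andP [xD' hx] ->; split; last exact: imset_f.
    by rewrite (satD_porbit stD' ss xD').
rewrite card_imset; last exact: perm_inj.
rewrite /beta addKn; apply: eq_card => y; by rewrite !inE /valid andbC.
Qed.

Lemma count_q : #|[set q | agree q && satD p t E q]| = (hc p c - beta) * (#|T| - #|D|)`!.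
Proof.
rewrite -count_valid -sum1dep_card (partition_big (fun q : {perm T} => q u) predT) //=.
rewrite -sum_nat_const [RHS]big_mkcond /=; apply: eq_bigr => y _.
rewrite sum1dep_card count_y inE; by case: (valid y).
Qed.

Lemma count_w : #|[set w | perm_on (~: D') w && satD p t E (w * s)%g]| =
  (hc p c - beta) * (#|T| - #|D|)`!.
Proof.
rewrite -count_q -(card_imset _ (mulIg s)); apply: eq_card => q; rewrite !inE.
apply/imsetP/andP.
- move=> [w]; rewrite inE => /andP [pw sE] ->; split => //.
  apply/forall_inP => x xD'; rewrite permM (out_perm pw) //.
  by rewrite inE negbK.
- move=> [/forall_inP ag sE]; exists (q * s^-1)%g; last by rewrite -mulgA mulVg mulg1.
  rewrite inE -mulgA mulVg mulg1 sE andbT.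
  apply/subsetP => x; rewrite inE => hx; rewrite inE; apply/negP => xD'.
  by move: hx; rewrite permM (eqP (ag _ xD')) permK eqxx.
Qed.
End Fixs.

Lemma satD'_mul (w s : {perm T}) : perm_on (~: D') w -> satD p t D' (w * s)%g = satD p t D' s.
Proof.
move=> pw; apply: eq_forallb_in => x xD'.
have h : forall z, z \in D' -> w z = z by move=> z zD; rewrite (out_perm pw) // inE negbK.
by rewrite !permM !h //; apply: stD'.
Qed.

Lemma card_perm_on (A : {set T}) : #|[set w : {perm T} | perm_on A w]| = #|A|`!.
Proof. by rewrite -card_perm; apply: eq_card => w; rewrite inE. Qed.

Lemma step : gD p t D * (#|T| - #|D'|)`! = gD p t D' * ((hc p c - beta) * (#|T| - #|D|)`!).
Proof.
set X := (hc p c - beta) * (#|T| - #|D|)`!.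
transitivity (\sum_(s | satD p t D' s) #|[set w | perm_on (~: D') w && satD p t E (w * s)%g]|).
  rewrite (eq_bigr (fun s => \sum_(w | perm_on (~: D') w) (satD p t E (w * s)%g : nat))); last first.
    by move=> s _; rewrite card_cond.
  rewrite (@exchange_big _ _ _ _ _ _ _ (fun s => satD p t D' s) (fun w : {perm T} => perm_on (~: D') w)) /=.
  rewrite (eq_bigr (fun _ => gD p t D * 1)); last first.
    move=> w pw; rewrite muln1 -card_cond /gD -[RHS](card_mul_pre w); apply: eq_card => s.
    by rewrite !inE satD_split (satD'_mul _ pw).
  rewrite -big_distrr /= sum1dep_card card_perm_on.
  by rewrite -(cardsC D') addKn.
rewrite (eq_bigr (fun _ => 1 * X)); last by move=> s ss; rewrite mul1n count_w.
by rewrite -big_distrl /= sum1dep_card.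
Qed.
End Step.

Definition heq K (p p' : {perm T}) := forall c, 0 < c <= K -> hc p c = hc p' c.

Lemma gD_set0 (p t : {perm T}) : gD p t set0 = #|[set s : {perm T} | true]|.
Proof. by apply: eq_card => s; rewrite !inE; apply/forall_inP => x; rewrite inE. Qed.

Lemma closed_inv K (t : {perm T}) (D : {set T}) : (forall x, x \in D -> t x \in D) ->
  #|D| <= K -> forall p p', heq K p p' -> gD p t D = gD p' t D.
Proof.
move: {2}#|D| (leqnn #|D|) => m; elim: m D => [|m IH] D hm stD hK p p' hpp.
  move: hm; rewrite leqn0 cards_eq0 => /eqP ->; by rewrite !gD_set0.
case: (set_0Vmem D) => [-> | [u uD]]; first by rewrite !gD_set0.
have st1 := step p stD uD; have st2 := step p' stD uD.
have hD' : #|D :\: porbit t u| < #|D|.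
  rewrite -(cardsID (porbit t u) D) -addn1 addnC leq_add2r card_gt0.
  by apply/set0Pn; exists u; rewrite inE uD porbit_id.
have e1 : gD p t (D :\: porbit t u) = gD p' t (D :\: porbit t u).
  apply: IH => //.
  - by rewrite -ltnS (leq_trans hD').
  - exact: (stD' stD).
  - by apply: leq_trans hK; apply: ltnW.
have e2 : hc p #|porbit t u| = hc p' #|porbit t u|.
  apply: hpp; rewrite (c_gt0 t u) /=; apply: leq_trans hK.
  exact: subset_leq_card (E_sub stD uD).
apply/eqP; rewrite -(eqn_pmul2r (fact_gt0 (#|T| - #|D :\: porbit t u|))).
by rewrite st1 st2 e1 e2.
Qed.
End Closed.

Section Path.
Variable T : finType.
Implicit Types (A B : {set T * T}) (p s : {perm T}).

Definition sat p A s := [forall q in A, p (s q.1) == s q.2].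
Definition gA p A := #|[set s | sat p A s]|.
Definition dom A := [set q.1 | q in A].
Definition supp A := [set q.1 | q in A] :|: [set q.2 | q in A].
Definition pinj A := [forall q in A, [forall q' in A, (q.1 == q'.1) == (q.2 == q'.2)]].

Lemma gA_npinj p A : ~~ pinj A -> gA p A = 0.
Proof.
move=> hn; apply: eq_card0 => s; rewrite inE; apply/negP => /forall_inP hs.
move/negP: hn; apply; apply/forall_inP => q qA; apply/forall_inP => q' q'A.
rewrite -(inj_eq (@perm_inj _ s)) -(inj_eq (@perm_inj _ p)) (eqP (hs q qA)) (eqP (hs q' q'A)).
by rewrite (inj_eq (@perm_inj _ s)).
Qed.

Lemma pinjP A q q' : pinj A -> q \in A -> q' \in A -> (q.1 == q'.1) = (q.2 == q'.2).
Proof. by move=> /forall_inP h qA q'A; move/forall_inP: (h q qA) => h'; have /eqP := h' q' q'A. Qed.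

Lemma mem_supp1 A q : q \in A -> q.1 \in supp A.
Proof. by move=> qA; rewrite inE imset_f. Qed.
Lemma mem_supp2 A q : q \in A -> q.2 \in supp A.
Proof. by move=> qA; rewrite inE orbC imset_f. Qed.

Lemma suppP A x : reflect (exists2 q, q \in A & (x == q.1) || (x == q.2)) (x \in supp A).
Proof.
apply: (iffP idP).
- rewrite inE => /orP [] /imsetP [q qA ->]; exists q => //; by rewrite eqxx ?orbT.
- move=> [q qA /orP [] /eqP ->]; [exact: mem_supp1 | exact: mem_supp2].
Qed.

Lemma sat_U1 p B q s : sat p (B :|: [set q]) s = sat p B s && (p (s q.1) == s q.2).
Proof.
apply/forall_inP/andP.
- move=> h; split; last by apply: h; rewrite !inE eqxx orbT.
  by apply/forall_inP => q' q'B; apply: h; rewrite inE q'B.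
- move=> [/forall_inP h1 h2] q'; rewrite !inE => /orP [|/eqP -> //]; exact: h1.
Qed.

Section ClosedCase.
Variable A : {set T * T}.
Hypothesis pA : pinj A.
Hypothesis clA : forall q, q \in A -> q.2 \in dom A.

Definition fA x := odflt x [pick y | (x, y) \in A].

Lemma fA_in x y : (x, y) \in A -> fA x = y.
Proof.
move=> xyA; rewrite /fA; case: pickP => [y' h /= | /(_ y)]; last by rewrite xyA.
by apply/eqP; rewrite -(pinjP pA h xyA) /= eqxx.
Qed.

Lemma fA_dom x : x \in dom A -> (x, fA x) \in A.
Proof. by move=> /imsetP [[a b] qA ->] /=; rewrite (fA_in qA). Qed.

Lemma fA_out x : x \notin dom A -> fA x = x.
Proof.
move=> xn; rewrite /fA; case: pickP => [y h | //].
by move: xn; rewrite (imset_f (fun q : T * T => q.1) h).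
Qed.

Lemma fA_inj : injective fA.
Proof.
have stab : forall x, x \in dom A -> fA x \in dom A.
  by move=> x xD; exact: (clA (fA_dom xD)).
move=> x y; case: (boolP (x \in dom A)) => xD; case: (boolP (y \in dom A)) => yD.
- move=> e; have h1 := fA_dom xD; have h2 := fA_dom yD; rewrite e in h1.
  by apply/eqP; rewrite (pinjP pA h1 h2) eqxx.
- by move=> e; have := stab _ xD; rewrite e (fA_out yD) => h; rewrite h in yD.
- by move=> e; have := stab _ yD; rewrite -e (fA_out xD) => h; rewrite h in xD.
- by rewrite (fA_out xD) (fA_out yD).
Qed.

Definition tA := perm fA_inj.

Lemma closed_repr p : gA p A = gD p tA (dom A).
Proof.
apply: eq_card => s; rewrite !inE; apply/forall_inP/forall_inP.
- move=> h x xD; rewrite permE; exact: (h _ (fA_dom xD)).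
- move=> h q qA; have qD : q.1 \in dom A by apply: imset_f.
  by have := h _ qD; rewrite permE -(fA_in (x := q.1) (y := q.2)) // -surjective_pairing.
Qed.

Lemma closed_stable x : x \in dom A -> tA x \in dom A.
Proof. by move=> xD; rewrite permE; exact: (clA (fA_dom xD)). Qed.

End ClosedCase.


Section PathStep.
Variables (A : {set T * T}) (u v : T).
Hypothesis pA : pinj A.
Hypothesis uvA : (u, v) \in A.
Hypothesis vnd : v \notin dom A.
Local Notation B := (A :\ (u, v)).
Local Notation S := (supp (A :\ (u, v)) :|: [set u]).

Lemma u_ne_v : u != v.
Proof. by apply: contraNneq vnd => <-; exact: (imset_f (fun q : T * T => q.1) uvA). Qed.

Lemma v_notin_suppB : v \notin supp B.
Proof.
apply/negP => /suppP [q]; rewrite inE => /andP [qne qA] /orP [] /eqP e.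
  by move: vnd; rewrite e (imset_f (fun q : T * T => q.1) qA).
have := pinjP pA qA uvA; rewrite /= -e eqxx => /eqP q1.
by move: qne; rewrite -q1 e -surjective_pairing inE eqxx.
Qed.

Lemma v_notin_S : v \notin S.
Proof. by rewrite in_setU in_set1 negb_or v_notin_suppB eq_sym u_ne_v. Qed.

Lemma A_eq : A = B :|: [set (u, v)].
Proof. by rewrite setUC setD1K. Qed.

Lemma sum_w p : gA p B = \sum_w gA p (B :|: [set (u, w)]).
Proof.
rewrite /gA -sum1dep_card (partition_big (fun s : {perm T} => (s^-1)%g (p (s u))) predT) //=.
apply: eq_bigr => w _; rewrite sum1dep_card; apply: eq_card => s; rewrite !inE sat_U1 /=.
by rewrite -(inj_eq (@perm_inj _ s)) permKV.
Qed.

Lemma fresh_w p w : w \notin S -> gA p (B :|: [set (u, w)]) = gA p A.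
Proof.
move=> wS; rewrite /gA -[RHS](card_mul_pre (tperm v w)); apply: eq_card => s; rewrite !inE.
rewrite [in RHS]A_eq !sat_U1 /= !permM tpermL.
have uv := u_ne_v; have uw : u != w by apply: contraNneq wS => <-; rewrite !inE eqxx orbT.
rewrite (tpermD (x := v) (y := w) (z := u)) 1?eq_sym //; congr andb.
apply: eq_forallb_in => q qB; rewrite !permM.
have fix1 : forall x, x \in supp B -> tperm v w x = x.
  move=> x xB; apply: tpermD.
  - by apply/eqP => e; move: xB; rewrite -e (negPf v_notin_suppB).
  - by apply/eqP => e; move: wS; rewrite e inE xB.
by rewrite !fix1 //; [exact: mem_supp2 | exact: mem_supp1].
Qed.

Lemma path_step p : gA p B = (#|T| - #|S|) * gA p A + \sum_(w in S) gA p (B :|: [set (u, w)]).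
Proof.
rewrite sum_w (bigID (fun w => w \in S)) addnC /=; congr (_ + _).
rewrite (eq_bigr (fun _ => 1 * gA p A)); last by move=> w wS; rewrite mul1n fresh_w.
by rewrite -big_distrl /= sum1dep_card -(cardsC S) addKn; congr (_ * _).
Qed.

Lemma suppS : supp B \subset S.
Proof. by apply/subsetP => x xB; rewrite inE xB. Qed.

Lemma suppSw w : w \in S -> supp (B :|: [set (u, w)]) \subset S.
Proof.
move=> wS; apply/subsetP => x /suppP [q qin hx]; move: qin => /setUP [qB | /set1P qe].
  by case/orP: hx => /eqP ->; rewrite in_setU ?(mem_supp1 qB) ?(mem_supp2 qB).
case/orP: hx => /eqP ->; rewrite qe /=; last exact: wS.
by rewrite in_setU in_set1 eqxx orbT.
Qed.

Lemma S_lt : #|S| < #|supp A|.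
Proof.
apply: proper_card; apply/properP; split; last by exists v; [exact: mem_supp2 uvA | exact: v_notin_S].
apply/subsetP => x /setUP [/suppP [q /setD1P [_ qA] /orP [] /eqP ->] | /set1P ->].
- exact: mem_supp1.
- exact: mem_supp2.
exact: mem_supp1 uvA.
Qed.

Lemma S_ltT : 0 < #|T| - #|S|.
Proof.
rewrite -(cardsC S) addKn card_gt0; apply/set0Pn; exists v; rewrite inE; exact: v_notin_S.
Qed.

Lemma cardB : #|B| < #|A|.
Proof. by rewrite (cardsD1 (u, v) A) uvA. Qed.

Lemma cardBw w : #|B :|: [set (u, w)]| <= #|A|.
Proof. by apply: leq_trans (leq_card_setU _ _) _; rewrite cards1 addn1; exact: cardB. Qed.

End PathStep.

Lemma core_step K A p p' : heq K p p' -> #|A| <= K ->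
  (forall A', #|supp A'| < #|supp A| -> #|A'| <= K -> gA p A' = gA p' A') ->
  gA p A = gA p' A.
Proof.
move=> hpp hK IH; case: (boolP (pinj A)) => pA; last by rewrite !gA_npinj.
case: (boolP [exists q in A, q.2 \notin dom A]).
  move=> /exists_inP [[u v] uvA /= vnd].
  have e1 := path_step pA uvA vnd p; have e2 := path_step pA uvA vnd p'.
  have eB : gA p (A :\ (u, v)) = gA p' (A :\ (u, v)).
    apply: IH; last by apply: (@leq_trans #|A|) => //; apply: ltnW; exact: cardB.
    exact: leq_ltn_trans (subset_leq_card (suppS A u v)) (S_lt pA uvA vnd).
  have eW : \sum_(w in supp (A :\ (u, v)) :|: [set u]) gA p (A :\ (u, v) :|: [set (u, w)]) =
            \sum_(w in supp (A :\ (u, v)) :|: [set u]) gA p' (A :\ (u, v) :|: [set (u, w)]).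
    apply: eq_bigr => w wS; apply: IH; last by apply: (@leq_trans #|A|) => //; exact: cardBw.
    exact: leq_ltn_trans (subset_leq_card (suppSw wS)) (S_lt pA uvA vnd).
  apply/eqP; rewrite -(eqn_pmul2l (S_ltT pA uvA vnd)); apply/eqP.
  by apply: (@addIn (\sum_(w in supp (A :\ (u, v)) :|: [set u]) gA p (A :\ (u, v) :|: [set (u, w)]))); rewrite -e1 eW -e2.
rewrite negb_exists_in => /forall_inP hcl.
have clA : forall q, q \in A -> q.2 \in dom A by move=> q qA; have := hcl q qA; rewrite negbK.
rewrite !(closed_repr pA clA); apply: (closed_inv (K := K)) hpp.
  exact: closed_stable.
by apply: (leq_trans _ hK); exact: leq_imset_card.
Qed.

Lemma core K A p p' : heq K p p' -> #|A| <= K -> gA p A = gA p' A.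
Proof.
move=> hpp; move: {2}#|supp A| (leqnn #|supp A|) => m; elim: m A => [|m IH] A hm hK.
  apply: core_step hpp hK _ => A' hA'; by move: (leq_trans hA' hm).
apply: core_step hpp hK _ => A' hA' hK'; apply: IH hK'.
by rewrite -ltnS (leq_trans hA' hm).
Qed.
End Path.

Section CT.
Variable T : finType.

Definition ctT (p : {perm T}) := sort geq [seq #|c| | c : {set T} <- enum (porbits p)].

Lemma geq_tot : total geq. Proof. by move=> x y; exact: leq_total. Qed.
Lemma geq_tr : transitive geq. Proof. by move=> a b c h1 h2; exact: leq_trans h2 h1. Qed.
Lemma geq_anti : antisymmetric geq.
Proof. by move=> a b /andP [h1 h2]; apply/eqP; rewrite eqn_leq; apply/andP; split. Qed.

Lemma count_ct (p : {perm T}) c : count_mem c (ctT p) = #|[set O in porbits p | #|O| == c]|.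
Proof.
have h : perm_eq (ctT p) [seq #|c| | c : {set T} <- enum (porbits p)] by rewrite perm_sort perm_refl.
rewrite (seq.permP h) count_map count_enum_card; apply: eq_card => O; by rewrite !inE.
Qed.

Lemma mult_hc (p : {perm T}) c : c * count_mem c (ctT p) = hc p c.
Proof. by rewrite count_ct hc_porbits. Qed.

Lemma count0_ct (p : {perm T}) : count_mem 0 (ctT p) = 0.
Proof.
rewrite count_ct; apply: eq_card0 => O; rewrite !inE; apply/negP => /andP [/imsetP [x _ ->]].
by rewrite (negPf (card_porbit_neq0 _ _)).
Qed.

Lemma ct_eq_gen (p : {perm T}) (la : seq nat) : sorted geq la -> count_mem 0 la = 0 ->
  (forall c, 0 < c -> c * count_mem c la = hc p c) -> ctT p = la.
Proof.
move=> sla z hla; apply: (sorted_eq geq_tr geq_anti); first exact: (sort_sorted geq_tot).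
  exact: sla.
apply/allP => x _; rewrite inE; case: x => [|x]; first by rewrite count0_ct z.
by rewrite -(eqn_pmul2l (ltn0Sn x)) mult_hc hla.
Qed.

Lemma ct_conj (p s : {perm T}) : ctT (p ^ s)%g = ctT p.
Proof.
apply: ct_eq_gen; first exact: (sort_sorted geq_tot).
  exact: count0_ct.
by move=> c _; rewrite mult_hc hc_conj.
Qed.

Lemma cycle_exists (Y : {set T}) : exists q : {perm T}, perm_on Y q /\ forall y, y \in Y -> porbit q y = Y.
Proof.
have hu := enum_uniq (pred_of_set Y).
have inj : injective (next (enum Y)) by apply: (can_inj (prev_next hu)).
exists (perm inj); split.
  apply/subsetP => x; rewrite inE permE; apply: contraNT => xY.
  by rewrite next_nth mem_enum (negPf xY).
move=> y yY; apply/setP => z; apply/porbit_memP/idP.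
- move=> [i ->]; elim: i => [|i IH] //=; by rewrite permE -mem_enum mem_next mem_enum.
- move=> zY.
  have hc : fconnect (next (enum Y)) y z.
    by rewrite (fconnect_cycle (cycle_next hu)) mem_enum.
  exists (findex (next (enum Y)) y z); rewrite -{1}(iter_findex hc).
  by apply: eq_iter => w; rewrite permE.
Qed.

Lemma iter_agree (p q : {perm T}) (Z : {set T}) : (forall x, x \in Z -> p x = q x) ->
  (forall x, x \in Z -> q x \in Z) -> forall i x, x \in Z -> iter i p x = iter i q x /\ iter i q x \in Z.
Proof.
move=> h st; elim=> [|i IH] x xZ //=; have [e m] := IH x xZ; rewrite e h //; split => //; exact: st.
Qed.

Lemma porbit_agree (p q : {perm T}) (Z : {set T}) : (forall x, x \in Z -> p x = q x) ->
  (forall x, x \in Z -> q x \in Z) -> forall x, x \in Z -> porbit p x = porbit q x.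
Proof.
move=> h st x xZ; apply/setP => y; apply/porbit_memP/porbit_memP => [] [i ->]; exists i;
  by have [e _] := iter_agree h st i xZ.
Qed.

Lemma exists_ct (la : seq nat) : forall X : {set T}, all (fun x => 0 < x) la -> sumn la = #|X| ->
  exists p : {perm T}, perm_on X p /\
    forall c, 0 < c -> #|[set x in X | #|porbit p x| == c]| = c * count_mem c la.
Proof.
elim: la => [|l la IH] X /=.
  move=> _ /esym /eqP; rewrite cards_eq0 => /eqP ->; exists 1%g; split.
    by apply/subsetP => x; rewrite inE perm1 eqxx.
  by move=> c _; rewrite muln0; apply: eq_card0 => x; rewrite !inE.
move=> /andP [l0 pla] hs.
pose Y := [set x in take l (enum X)].
have hY : #|Y| = l.
  rewrite cardsE (card_uniqP _); last exact: take_uniq (enum_uniq _).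
  by rewrite size_takel // -cardE -hs leq_addr.
have YX : Y \subset X by apply/subsetP => x; rewrite inE => /mem_take; rewrite mem_enum.
have hs' : sumn la = #|X :\: Y| by rewrite cardsD (setIidPr YX) hY -hs addKn.
have [p' [pp' hp']] := IH (X :\: Y) pla hs'.
have [q [pq hq]] := cycle_exists Y.
exists (p' * q)%g; split.
  apply: perm_onM; first by apply: subset_trans pp' _; apply: subsetDl.
  by apply: subset_trans pq YX.
have eY : forall x, x \in Y -> porbit (p' * q)%g x = Y.
  move=> x xY; rewrite -(hq x xY); apply: (porbit_agree (Z := Y)) => //.
  - by move=> z zY; rewrite permM (out_perm pp') // in_setD zY.
  - by move=> z zY; rewrite (perm_closed _ pq).
have eN : forall x, x \notin Y -> porbit (p' * q)%g x = porbit p' x.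
  move=> x xY; apply: (porbit_agree (Z := ~: Y)); last by rewrite inE.
  - move=> z; rewrite in_setC => zY; rewrite permM (out_perm pq) //.
    case: (boolP (z \in X :\: Y)) => zXY.
      by have := zXY; rewrite -(perm_closed _ pp') in_setD => /andP [].
    by rewrite (out_perm pp' zXY).
  - move=> z; rewrite !in_setC => zY; case: (boolP (z \in X :\: Y)) => zXY.
      by have := zXY; rewrite -(perm_closed _ pp') in_setD => /andP [].
    by rewrite (out_perm pp' zXY).
move=> c c0.
rewrite /= mulnDr -(hp' c c0) -(cardsID Y); congr (_ + _).
  transitivity #|[set x in Y | l == c]|.
    apply: eq_card => x; rewrite in_setI [in RHS]inE; case: (boolP (x \in Y)) => xY; rewrite ?andbF //=.
    by rewrite inE eY // hY (subsetP YX x xY) andbT.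
  case: eqP => [<- | ne]; first by rewrite muln1 -hY; apply: eq_card => x; rewrite !inE andbT.
  by rewrite muln0; apply: eq_card0 => x; rewrite !inE andbF.
apply: eq_card => x; rewrite in_setD [in RHS]inE in_setD; case: (boolP (x \in Y)) => xY //=.
by rewrite inE eN.
Qed.

End CT.

Import Order.TTheory GRing.Theory Num.Theory.

Section Final.
Variable n : nat.
Local Notation T := 'I_n.

Definition ext (A : {set T * T}) (p : {perm T}) := [forall q in A, p q.1 == q.2].

Lemma card_inv_pre (P : pred {perm T}) : #|[set s | P (s^-1)%g]| = #|[set s | P s]|.
Proof.
rewrite -(card_imset _ (@invg_inj _)); apply: eq_card => s; rewrite !inE.
apply/imsetP/idP.
- by move=> [s']; rewrite inE => h ->.
- by move=> h; exists (s^-1)%g; rewrite ?inE invgK.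
Qed.

Lemma ext_conj_card (p : {perm T}) A : #|[set s | ext A (p ^ s)%g]| = gA p A.
Proof.
rewrite /gA -card_inv_pre; apply: eq_card => s; rewrite !inE.
apply: eq_forallb_in => q qA; rewrite /conjg !permM.
by rewrite -(inj_eq (@perm_inj _ (s^-1)%g)) permK.
Qed.

Local Open Scope ring_scope.

Definition Rep (R : comNzRingType) K (F : {perm T} -> R) :=
  exists L : seq (R * {set T * T}), all (fun t : R * {set T * T} => #|t.2| <= K)%N L /\
    forall p, F p = \sum_(t <- L) t.1 * (ext t.2 p)%:R.

Lemma Rep_one (R : comNzRingType) : Rep 0 (fun _ => 1 : R).
Proof.
exists [:: (1, set0)]; split; first by rewrite /= cards0.
move=> p; rewrite big_seq1 /= mul1r.
have -> : ext set0 p by apply/forall_inP => q; rewrite inE.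
by [].
Qed.

Lemma ext_U A B p : ext (A :|: B) p = ext A p && ext B p.
Proof.
apply/forall_inP/andP.
- by move=> h; split; apply/forall_inP => q qA; apply: h; rewrite inE qA ?orbT.
- by move=> [/forall_inP h1 /forall_inP h2] q; rewrite inE => /orP [] ?; [apply: h1 | apply: h2].
Qed.

Lemma Rep_mul (R : comNzRingType) K1 K2 (F G : {perm T} -> R) :
  Rep K1 F -> Rep K2 G -> Rep (K1 + K2) (fun p => F p * G p).
Proof.
move=> [L1 [h1 e1]] [L2 [h2 e2]].
exists [seq (a.1 * b.1, a.2 :|: b.2) | a <- L1, b <- L2]; split.
  apply/allP => t /allpairsP [[a b] [/= aL bL ->]] /=.
  apply: leq_trans (leq_card_setU _ _) _.
  exact: leq_add (allP h1 a aL) (allP h2 b bL).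
move=> p; rewrite e1 e2 big_allpairs_dep /= mulr_suml; apply: eq_bigr => a _.
rewrite mulr_sumr; apply: eq_bigr => b _ /=.
by rewrite ext_U -mulnb natrM mulrACA.
Qed.


Lemma Rep_ext (R : comNzRingType) K (F G : {perm T} -> R) : (forall p, F p = G p) -> Rep K F -> Rep K G.
Proof. by move=> e [L [h1 h2]]; exists L; split => // p; rewrite -e. Qed.

Lemma Rep_pow (R : comNzRingType) K (F : {perm T} -> R) d : Rep K F -> Rep (K * d) (fun p => F p ^+ d).
Proof.
move=> hF; elim: d => [|d IH].
  by rewrite muln0; apply: Rep_ext (Rep_one R) => p; rewrite expr0.
rewrite mulnS addnC; apply: Rep_ext (Rep_mul IH hF) => p; by rewrite exprSr.
Qed.

Lemma Rep_lin (R : comNzRingType) k (f : {perm T} -> R) : lin_comb_pp k f -> Rep k f.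
Proof.
move=> [s [hs ef]].
exists [seq (t.1, [set x in zip t.2.1 t.2.2]) | t <- s]; split.
  apply/allP => t /mapP [t' t's ->] /=; have [l lk] := hs t' t's.
  move=> /and4P [/eqP s1 _ _ _].
  rewrite cardsE (leq_trans (card_size _)) // size_zip (leq_trans (geq_minl _ _)) //.
  by rewrite s1.
move=> p; rewrite ef big_map; apply: eq_bigr => t _ /=; congr (_ * _); rewrite /ind_pp; congr (_%:R).
congr (nat_of_bool _); apply/idP/idP => h.
  by apply/forall_inP => q; rewrite inE => qz; exact: (allP h q qz).
by apply/allP => q qz; apply: (forall_inP h); rewrite inE.
Qed.

Definition avg (R : comNzRingType) (F : {perm T} -> R) p := \sum_(s : {perm T}) F (p ^ s)%g.

Lemma sum_bool (U : finType) (P : pred U) : (\sum_(x : U) (P x : nat) = #|[set x | P x]|)%N.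
Proof. by rewrite -sum1dep_card [RHS]big_mkcond /=; apply: eq_bigr => x _; case: (P x). Qed.

Lemma avg_rep (R : comNzRingType) K (F : {perm T} -> R) p p' :
  Rep K F -> heq K p p' -> avg F p = avg F p'.
Proof.
move=> [L [hL eF]] h.
have key : forall q, avg F q = \sum_(t <- L) t.1 * (gA q t.2)%:R.
  move=> q; rewrite /avg (eq_bigr _ (fun s _ => eF (q ^ s)%g)) exchange_big /=.
  apply: eq_bigr => t _; rewrite -mulr_sumr -natr_sum sum_bool ext_conj_card //.
rewrite !key big_seq [RHS]big_seq; apply: eq_bigr => t tL.
by rewrite (core h (allP hL t tL)).
Qed.

Lemma ct_conj_T (p s : {perm T}) : cycle_type (p ^ s)%g = cycle_type p.
Proof. exact: ct_conj. Qed.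

Lemma Exp_val (R : numFieldType) la (F : {perm T} -> R) p0 : cycle_type p0 = la ->
  (forall p, cycle_type p = la -> avg F p = avg F p0) ->
  Exp_ct la F = avg F p0 / (#|{perm T}|)%:R.
Proof.
move=> hp0 hav.
set C := [set p : {perm T} | cycle_type p == la].
have c0 : (#|C|%:R : R) != 0 by rewrite pnatr_eq0 cards_eq0; apply/set0Pn; exists p0; rewrite inE hp0.
have N0 : (#|{perm T}|%:R : R) != 0 by rewrite pnatr_eq0 -lt0n; apply/card_gt0P; exists 1%g.
have key : (\sum_(p | cycle_type p == la) F p) * (#|{perm T}|)%:R = avg F p0 * #|C|%:R.
  transitivity (\sum_(p | cycle_type p == la) avg F p).
    symmetry; rewrite /avg exchange_big /=.
    rewrite (eq_bigr (fun _ => \sum_(p | cycle_type p == la) F p)); last first.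
      move=> s _; rewrite [RHS](reindex_inj (conjg_inj s)) /=.
      by apply: eq_bigl => p; rewrite ct_conj_T.
    by rewrite sumr_const mulr_natr.
  rewrite (eq_bigr (fun _ => avg F p0)); last by move=> p /eqP; apply: hav.
  rewrite mulr_natr -sumr_const; apply: eq_bigl => p; by rewrite inE.
rewrite /Exp_ct -/C; apply/eqP; rewrite eqr_div //; exact/eqP.
Qed.

Lemma count0_pos (la : seq nat) : all (fun x => 0 < x)%N la -> count_mem 0%N la = 0%N.
Proof. by elim: la => //= x l IH /andP [x0 h]; rewrite IH // addn0; move: x0; case: x. Qed.

Lemma exists_perm la : is_partition n la -> exists p : {perm T}, cycle_type p = la.
Proof.
move=> /and3P [sla pla /eqP sln].
have hX : sumn la = #|[set: T]| by rewrite cardsT card_ord.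
have [p [_ hp]] := @exists_ct _ la [set: T] pla hX.
exists p; apply: ct_eq_gen => //; first exact: count0_pos.
move=> c c0; rewrite -hp //; apply: eq_card => x; by rewrite !inE.
Qed.

Lemma heq_ct K (p q : {perm T}) : (forall c, (0 < c <= K)%N -> mult c (cycle_type p) = mult c (cycle_type q)) ->
  heq K p q.
Proof. by move=> h c hc; rewrite -!mult_hc /mult in h *; rewrite -[cycle_type p]/(ctT p) -[cycle_type q]/(ctT q) in h; rewrite h. Qed.
End Final.

Local Open Scope ring_scope.

Theorem proposition5p7 (R : realFieldType) (d k n : nat) (f : {perm 'I_n} -> R) :
  (1 <= n)%N -> lin_comb_pp k f ->
  (forall la mu : seq nat, is_partition n la -> is_partition n mu ->
     (forall i, (1 <= i <= k * d)%N -> mult i la = mult i mu) ->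
     Exp_ct la (fun pi => f pi ^+ d) = Exp_ct mu (fun pi => f pi ^+ d)) /\
  (forall la : seq nat, is_partition n la ->
     (forall i, (1 <= i <= k * d)%N -> mult i la = 0%N) ->
     Exp_ct la (fun pi => f pi ^+ d) = Exp_ct [:: n] (fun pi => f pi ^+ d)).
Proof.
move=> n1 hf.
have hR := Rep_pow d (Rep_lin hf).
have hv : forall la (p0 : {perm 'I_n}), cycle_type p0 = la ->
    Exp_ct la (fun pi => f pi ^+ d) = avg (fun pi => f pi ^+ d) p0 / (#|{perm 'I_n}|)%:R.
  move=> la p0 hp0; apply: (Exp_val hp0) => p hp; apply: (avg_rep hR).
  by apply: heq_ct => c _; rewrite hp hp0.
have part1 : forall la mu : seq nat, is_partition n la -> is_partition n mu ->
     (forall i, (1 <= i <= k * d)%N -> mult i la = mult i mu) ->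
     Exp_ct la (fun pi => f pi ^+ d) = Exp_ct mu (fun pi => f pi ^+ d).
  move=> la mu pla pmu hm; have [p0 h0] := exists_perm pla; have [p1 h1] := exists_perm pmu.
  rewrite (hv _ _ h0) (hv _ _ h1); congr (_ / _); apply: (avg_rep hR).
  by apply: heq_ct => c hc; rewrite h0 h1; exact: hm.
split => // la pla hz; apply: part1 => //.
  by rewrite /is_partition /= n1 addn0 eqxx.
have big : (k * d < n)%N.
  case/and3P: pla => _; case: la hz => [|x l] hz /=; first by move=> _ /eqP n0; rewrite -n0 in n1.
  move=> /andP [x0 _] /eqP sn; rewrite ltnNge; apply/negP => hn.
  have := hz x; rewrite x0 /= (leq_trans _ hn) /mult /=; last by rewrite -sn leq_addr.
  by rewrite eqxx => /(_ isT).
move=> i /andP [i1 ik]; rewrite hz ?i1 // /mult /=.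
by case: eqP => // e; move: big; rewrite e ltnNge ik.
Qed.
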